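(* Let $n > 2k+1$. Every deterministic algorithm that, on every valid instance with $n$ elements and $k$ corrupted elements, outputs a set of exactly $2k+1$ elements containing the uncorrupted maximum, must make at least $(n-(2k+1))(k+1) = nk + (n - 2k^2 - 3k - 1)$ comparison queries on some instance.
   Context: Model: there are $n$ elements $x_1,\dots,x_n$, exactly $k$ of which are corrupted (unknown to the algorithm). For every pair of distinct elements the comparison graph (a tournament) specifies which one is larger. The comparison graph restricted to the $n-k$ uncorrupted elements is acyclic; comparisons involving corrupted elements may be oriented arbitrarily. The uncorrupted maximum is the uncorrupted element larger than every other uncorrupted element. An instance is a comparison graph together with a valid set of $k$ corrupted elements. An algorithm knows $n$ and $k$, may query the orientation of any pair (a comparison query, answered according to the comparison graph), and outputs a set of elements. *)

(* Defs.v *)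
From mathcomp Require Import all_boot.
Set Implicit Arguments. Unset Strict Implicit. Unset Printing Implicit Defensive.

(* Elements are 'I_n.  [gt x y] = true means "x is larger than y" in the
   comparison graph. *)

Definition tournament (n : nat) (gt : rel 'I_n) : Prop :=
  (forall x, ~~ gt x x) /\
  (forall x y, x != y -> gt x y = ~~ gt y x).

Definition acyclic_on (n : nat) (gt : rel 'I_n) (U : {set 'I_n}) : Prop :=
  forall s : seq 'I_n, s != [::] -> all (fun x => x \in U) s -> ~~ cycle gt s.

Record instance (n : nat) := Instance { cmp : rel 'I_n; corrupted : {set 'I_n} }.

Definition valid_instance (n k : nat) (I : instance n) : Prop :=
  tournament (cmp I) /\ #|corrupted I| = k /\
  acyclic_on (cmp I) (~: corrupted I).

Definition uncorrupted_max (n : nat) (I : instance n) (u : 'I_n) : Prop :=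
  u \notin corrupted I /\
  forall v, v \notin corrupted I -> v != u -> cmp I u v.

(* Deterministic adaptive algorithms as (finite) decision trees: either output
   a set, or query the orientation of the pair (i, j) and continue according
   to the answer ([cmp i j] = true goes to the first subtree). *)
Inductive algo (n : nat) :=
  | Output of {set 'I_n}
  | Query of 'I_n & 'I_n & algo n & algo n.

Fixpoint run (n : nat) (A : algo n) (gt : rel 'I_n) : {set 'I_n} :=
  match A with
  | Output s => s
  | Query i j At Af => if gt i j then run At gt else run Af gt
  end.

Fixpoint nqueries (n : nat) (A : algo n) (gt : rel 'I_n) : nat :=
  match A with
  | Output _ => 0
  | Query i j At Af => (if gt i j then nqueries At gt else nqueries Af gt).+1
  end.

Definition solves (n k : nat) (A : algo n) : Prop :=
  forall I : instance n, valid_instance k I ->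
    #|run A (cmp I)| = (2 * k).+1 /\
    (forall u, uncorrupted_max I u -> u \in run A (cmp I)).

(* Main.v *)
Require Import Defs.
From mathcomp Require Import all_boot zify.
Set Implicit Arguments. Unset Strict Implicit. Unset Printing Implicit Defensive.

Lemma acyclic_rank n (gt : rel 'I_n) (U : {set 'I_n}) (r : 'I_n -> nat) :
  (forall a b, a \in U -> b \in U -> gt a b -> r b < r a) -> acyclic_on gt U.
Proof.
move=> H [|a s] // _ allU; apply/negP => /= Hc.
have allU' : all (mem U) (a :: rcons s a).
  by rewrite /= all_rcons; move: allU => /= /andP[-> ->]; rewrite andbT.
have Hp : path [rel u v | r v < r u] a (rcons s a).
  apply: (sub_in_path _ allU') Hc => u v uU vU; exact: H.
have tr : transitive [rel u v | r v < r u].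
  by move=> u v w /= h1 h2; apply: ltn_trans h1.
have /allP/(_ a) := order_path_min tr Hp.
by rewrite mem_rcons mem_head /= ltnn => /(_ isT).
Qed.

Fixpoint qs n (A : algo n) (gt : rel 'I_n) : seq ('I_n * 'I_n) :=
  match A with
  | Output _ => [::]
  | Query i j At Af => (i, j) :: (if gt i j then qs At gt else qs Af gt)
  end.

Lemma size_qs n (A : algo n) gt : size (qs A gt) = nqueries A gt.
Proof. elim: A => [s|i j At IHt Af IHf] //=. by case: (gt i j); rewrite ?IHt ?IHf. Qed.

Lemma run_agree n (A : algo n) gt gt' :
  (forall i j, (i, j) \in qs A gt -> gt' i j = gt i j) -> run A gt' = run A gt.
Proof.
elim: A => [s|i j At IHt Af IHf] //= H.
rewrite H ?mem_head //; case E: (gt i j).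
  by apply: IHt => a b h; apply: H; rewrite in_cons E h orbT.
by apply: IHf => a b h; apply: H; rewrite in_cons E h orbT.
Qed.

Lemma ex_card_between (T : finType) (W D : {set T}) k :
  W \subset D -> #|W| <= k -> k <= #|D| ->
  exists C : {set T}, [/\ W \subset C, C \subset D & #|C| = k].
Proof.
move=> WD; move e: (k - #|W|) => m; elim: m W WD e => [|m IH] W WD e Wk kD.
  by exists W; split => //; apply/eqP; rewrite eqn_leq Wk -subn_eq0 e.
have : #|W| < #|D| by apply: leq_trans kD; rewrite -subn_gt0 e.
move=> WltD.
have [y yD yW] : exists2 y, y \in D & y \notin W.
  have : 0 < #|D :\: W| by rewrite cardsD (setIidPr WD) subn_gt0.
  by case/card_gt0P => y; rewrite inE => /andP[yW yD]; exists y.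
have s1 : y |: W \subset D by rewrite subUset sub1set yD WD.
have s2 : k - #|y |: W| = m by rewrite cardsU1 yW /= addnC subnDA e subn1.
have s3 : #|y |: W| <= k by rewrite cardsU1 yW add1n -subn_gt0 e.
have [C [h1 h2 h3]] := IH (y |: W) s1 s2 s3 kD.
exists C; split => //; apply: subset_trans h1; exact: subsetUr.
Qed.

Definition gt0 n : rel 'I_n := fun a b => (b < a)%N.

Lemma gt0_tour n : tournament (@gt0 n).
Proof.
split=> [x|x y]; first by rewrite /gt0 ltnn.
by rewrite /gt0; case: ltngtP => // /val_inj ->; rewrite eqxx.
Qed.

Definition gtx n (x : 'I_n) (W : {set 'I_n}) : rel 'I_n := fun a b =>
  if a == x then (b != x) && (b \notin W)
  else if b == x then a \in W else gt0 a b.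

Lemma gtx_tour n (x : 'I_n) W : tournament (gtx x W).
Proof.
split=> [a|a b ab]; rewrite /gtx.
  by case: eqP => //= _; rewrite /gt0 ltnn.
case: (eqVneq a x) => [ax|ax]; case: (eqVneq b x) => [bx|bx] //=.
- by move: ab; rewrite ax bx eqxx.
- by rewrite negbK.
- by case: (gt0_tour n) => _ /(_ a b ab).
Qed.

Theorem mainTheorem3 (n k : nat) (A : algo n) :
  (2 * k).+1 < n -> solves k A ->
  exists I : instance n, valid_instance k I /\
    (n - (2 * k).+1) * k.+1 <= nqueries A (cmp I).
Proof.
move=> hn sol.
have kn : k <= n by lia.
have e1 : #|(set0 : {set 'I_n})| <= k by rewrite cards0.
have e2 : k <= #|[set: 'I_n]| by rewrite cardsT card_ord.
have [C0 [_ _ hC0]] := @ex_card_between _ set0 setT k (sub0set _) e1 e2.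
pose I0 := Instance (@gt0 n) C0.
have v0 : valid_instance k I0.
  split; first exact: gt0_tour.
  split; first exact: hC0.
  by apply: (@acyclic_rank _ _ _ (fun a => val a)) => a b.
have [cS memS] := sol I0 v0.
rewrite /= in cS memS.
set S := run A (@gt0 n) in cS memS.
set Q := qs A (@gt0 n).
pose W x := [set b | (((x, b) \in Q) || ((b, x) \in Q)) && gt0 b x].
have key : forall x, x \notin S -> k < #|W x|.
  move=> x xS; rewrite ltnNge; apply/negP => Wk.
  have xW : x \notin W x by rewrite inE /gt0 ltnn andbF.
  have WD : W x \subset [set~ x].
    by apply/subsetP => b bW; rewrite !inE; apply/eqP => bx; move: bW; rewrite bx (negbTE xW).
  have kD : k <= #|[set~ x]|.
    rewrite cardsC1 card_ord; lia.
  have [C [WC CD hC]] := ex_card_between WD Wk kD.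
  have xC : x \notin C by apply/negP => /(subsetP CD); rewrite !inE eqxx.
  pose I' := Instance (gtx x (W x)) C.
  have v' : valid_instance k I'.
    split; first exact: gtx_tour.
    split => //.
    apply: (@acyclic_rank _ _ _ (fun a => if a == x then n else val a)) => a b.
    rewrite !inE => aC bC /=; rewrite /gtx.
    case: (eqVneq a x) => [ax|ax].
      by case/andP => bx _; rewrite (negbTE bx) ltn_ord.
    case: (eqVneq b x) => [bx|bx] //.
    by move/(subsetP WC); rewrite (negbTE aC).
  have um : uncorrupted_max I' x.
    split => // v vC vx; rewrite /= /gtx eqxx vx /=.
    by apply/negP => /(subsetP WC); rewrite (negbTE vC).
  have := (sol I' v').2 x um.
  rewrite /= (@run_agree _ A (@gt0 n)) -/S ?(negbTE xS) //.
  move=> i j ij; rewrite /gtx.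
  case: (eqVneq i x) => [ix|ix].
    subst i; case: (eqVneq j x) => [->|jx] /=; first by rewrite /gt0 ltnn.
    rewrite inE -/Q ij /=.
    by case: (gt0_tour n) => _ /(_ x j); rewrite eq_sym => /(_ jx) ->.
  case: (eqVneq j x) => [jx|jx] //.
  by subst j; rewrite inE -/Q ij orbT.
pose P := [set p : 'I_n * 'I_n | (p.2 \notin S) && (p.1 \in W p.2)].
have c1 : #|P| <= size Q.
  pose nrm (q : 'I_n * 'I_n) := if gt0 q.1 q.2 then q else (q.2, q.1).
  rewrite -(size_map nrm Q); apply: leq_trans (card_size _).
  apply: subset_leq_card; apply/subsetP => -[b x].
  rewrite !inE /= => /andP[_ /andP[/orP[h|h] g]]; apply/mapP.
  - exists (x, b) => //; rewrite /nrm /= ifN //.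
    by move: g; rewrite /gt0 => g; rewrite -leqNgt ltnW.
  - by exists (b, x) => //; rewrite /nrm /= g.
have c2 : (n - (2 * k).+1) * k.+1 <= #|P|.
  have -> : #|P| = \sum_(x in ~: S) #|W x|.
    rewrite -sum1_card big_mkcond /=.
    rewrite (eq_bigr (fun p => if (p.1, p.2) \in P then 1 else 0)); last by case.
    rewrite -(pair_bigA _ (fun a b => if (a, b) \in P then 1 else 0)) /=.
    rewrite exchange_big /= [RHS]big_mkcond /=; apply: eq_bigr => x _.
    rewrite inE; case: (boolP (x \in S)) => xS /=.
      by apply: big1 => b _; rewrite inE /= xS.
    rewrite -sum1_card [RHS]big_mkcond /=; apply: eq_bigr => b _.
    by rewrite inE /= xS.
  apply: (@leq_trans (\sum_(x in ~: S) k.+1)).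
    rewrite sum_nat_const; have := cardsC S; rewrite card_ord cS => h.
    have -> : #|~: S| = n - (2 * k).+1 by lia.
    by [].
  by apply: leq_sum => x; rewrite inE; exact: key.
by exists I0; split => //; rewrite /= -size_qs; apply: leq_trans c2 c1.
Qed.
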